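(* Let $f:[0,T]\times\mathbb R^n\times\mathbb D[0,T]\times\mathbb R\times\mathbb R^{1\times d}\times\mathbb L^2(E,\nu)\to\mathbb R$ and $\xi:\mathbb R^n\to\mathbb R$ satisfy Assumptions (MS) and (ML) below. For $m\in\mathbb N$ define $$f_m\bigl(r,x,(q_v)_{v\in[r,T]},y,z,\psi\bigr):=f\bigl(r,x,(\varphi_m(q_v))_{v\in[r,T]},\varphi_m(y),\varphi_m(z),\varphi_m(\psi\circ\zeta_m)\bigr),$$ where $\varphi_m(x)=(-m)\vee(x\wedge m)$ is applied componentwise to $z$ and $\psi$, and $(\psi\circ\zeta_m)(e):=\psi(e)\mathbf 1_{|e|\ge1/m}$ (componentwise). Then $(f_m)_{m\in\mathbb N}$ (together with $\xi$) satisfy Assumptions (MS) and (ML) uniformly in $m\in\mathbb N$. Moreover, for each $m$, $f_m$ is a.e. bounded and globally Lipschitz in $(q,y,z,\psi)$: there is $L_m>0$ with $$|f_m(t,x,(q_v)_{v\in[t,T]},y,z,\psi)-f_m(t,x,(q'_v)_{v\in[t,T]},y',z',\psi')|\le L_m\Bigl(\sup_{v\in[t,T]}|q_v-q'_v|+|y-y'|+|z-z'|+\|\psi-\psi'\|_{\mathbb L^2(\nu)}\Bigr)$$ for all arguments, for a.e. $t$.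
   Context: Setting: $T>0$, $d,k,n\in\mathbb N$. $k$ $\sigma$-finite measures $\nu^1,\dots,\nu^k$ on $\mathbb R_0=\mathbb R\setminus\{0\}$ with $\int|e|^2\nu^i(de)<\infty$ (compensators $\nu^i(de)dt$ of independent Poisson random measures $\mu^i$ on the filtered probability space generated by them and a $d$-dimensional Brownian motion, with completed canonical filtration $\mathbb F$). $E=\mathbb R_0^k$; $\mathbb L^2(E,\nu)$ = $\psi=(\psi^i)_{i\le k}$, $\psi^i:\mathbb R_0\to\mathbb R$ Borel, with $\|\psi\|^2_{\mathbb L^2(\nu)}=\sum_i\int|\psi^i|^2d\nu^i<\infty$, and $\int_E g(\psi(e))\nu(de):=\sum_i\int g(\psi^i(e))\nu^i(de)$; $\|\psi\|_{\mathbb L^\infty(\nu)}$ the $\nu$-essential sup. $\mathbb D[0,T]$ real càdlàg functions. $\mathbb E_{\mathcal F_t}$ conditional expectation. $j_\gamma(u)=\frac1\gamma(e^{\gamma u}-1-\gamma u)$. Assumption (MS): (i) for every $(x,y,z,\psi)$ and every càdlàg adapted $(Y_v)$, $t\mapsto\mathbb E_{\mathcal F_t}f(t,x,(Y_v)_{v\in[t,T]},y,z,\psi)$ is progressively measurable; (ii) there are constants $\beta,\delta\ge0,\gamma>0$ and a positive non-random function $l$ on $[0,T]$ such that for every $(x,q,y,z,\psi)$, for $dt$-a.e. $t$, $-l_t-\delta\sup_{v\in[t,T]}|q_v|-\beta|y|-\frac\gamma2|z|^2-\int_Ej_\gamma(-\psi(e))\nu(de)\le f(t,x,(q_v)_{v\in[t,T]},y,z,\psi)\le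 l_t+\delta\sup_{v\in[t,T]}|q_v|+\beta|y|+\frac\gamma2|z|^2+\int_Ej_\gamma(\psi(e))\nu(de)$; (iii) $\sup_x|\xi(x)|<\infty$, $\sup_tl_t<\infty$. Assumption (ML): for each $M>0$ there is $K_M>0$, and constants $K_\xi\ge0,\rho\ge0,\alpha\in(0,1]$, such that for all arguments with $|y|,|y'|,\|\psi\|_{\mathbb L^\infty(\nu)},\|\psi'\|_{\mathbb L^\infty(\nu)},\sup_v|q_v|,\sup_v|q'_v|\le M$, for $dt$-a.e. $t$: $|f(t,x,(q_v),y,z,\psi)-f(t,x,(q'_v),y',z',\psi')|\le K_M(\sup_{v\in[t,T]}|q_v-q'_v|+|y-y'|+\|\psi-\psi'\|_{\mathbb L^2(\nu)})+K_M(1+|z|+|z'|+\|\psi\|_{\mathbb L^2(\nu)}+\|\psi'\|_{\mathbb L^2(\nu)})|z-z'|$; $|f(t,x,(q_v),y,z,\psi)-f(t,x',(q_v),y,z,\psi)|\le K_M(1+[|x|\vee|x'|]^\rho+|z|^2+\|\psi\|^2_{\mathbb L^2(\nu)})|x-x'|^\alpha$; $|\xi(x)-\xi(x')|\le K_\xi|x-x'|^\alpha$. *)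

(* Defs.v *)
From HB Require Import structures.
From mathcomp Require Import all_boot all_order all_algebra.
From mathcomp Require Import all_classical all_reals all_analysis.
From mathcomp Require Import ess_sup_inf.
Set Implicit Arguments. Unset Strict Implicit. Unset Printing Implicit Defensive.
Import Order.TTheory GRing.Theory Num.Def Num.Theory.
Import numFieldNormedType.Exports.
Local Open Scope classical_set_scope.
Local Open Scope ring_scope.

Definition enorm (R : realType) (p : nat) (x : 'rV[R]_p) : R :=
  Num.sqrt (\sum_(i < p) x ord0 i ^+ 2).

Definition phi (R : realType) (m : nat) (x : R) : R :=
  Num.max (- m%:R) (Num.min x m%:R).

Definition jfun (R : realType) (g u : R) : R := (expR (g * u) - 1 - g * u) / g.

Definition cadlag (R : realType) (T : R) (g : R -> R) : Prop :=
  (forall t, 0 <= t < T -> g s @[s --> t^'+] --> g t) /\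
  (forall t, 0 < t <= T -> exists l : R, g s @[s --> t^'-] --> l).

Definition supab (R : realType) (a b : R) (g : R -> R) : R :=
  sup [set `|g v| | v in [set v | a <= v <= b]].

Definition L2fun (R : realType) (k : nat)
  (nu : 'I_k -> {measure set R -> \bar R}) (psi : 'I_k -> R -> R) : Prop :=
  forall i, measurable_fun setT (psi i) /\
            (\int[nu i]_e ((psi i e) ^+ 2)%:E < +oo)%E.

Definition L2norm (R : realType) (k : nat)
  (nu : 'I_k -> {measure set R -> \bar R}) (psi : 'I_k -> R -> R) : R :=
  Num.sqrt (fine (\sum_(i < k) \int[nu i]_e ((psi i e) ^+ 2)%:E)%E).

Definition Linfnorm (R : realType) (k : nat)
  (nu : 'I_k -> {measure set R -> \bar R}) (psi : 'I_k -> R -> R) : \bar R :=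
  (\big[Order.max/0%E]_(i < k) ess_sup (nu i) (fun e => (`|psi i e|)%:E))%E.

Definition intE (R : realType) (k : nat)
  (nu : 'I_k -> {measure set R -> \bar R}) (g : R -> R) (psi : 'I_k -> R -> R)
  : \bar R :=
  (\sum_(i < k) \int[nu i]_e (g (psi i e))%:E)%E.

Definition sub_psi (R : realType) (k : nat) (psi psi' : 'I_k -> R -> R) :=
  fun i e => psi i e - psi' i e.

Definition gen_type (R : realType) (n d k : nat) :=
  R -> 'rV[R]_n -> (R -> R) -> R -> 'rV[R]_d -> ('I_k -> R -> R) -> R.

Definition fm (R : realType) (n d k : nat) (f : gen_type R n d k) (m : nat)
  : gen_type R n d k :=
  fun r x q y z psi =>
    f r x (fun v => phi m (q v)) (phi m y) (map_mx (phi m) z)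
      (fun i e => phi m (psi i e * (if (m%:R)^-1 <= `|e| then 1 else 0))).

Definition filtration (R : realType) (dO : measure_display) (O : measurableType dO)
  (F : R -> set (set O)) : Prop :=
  (forall t, sigma_algebra setT (F t)) /\
  (forall t, F t `<=` measurable) /\
  (forall s t, s <= t -> F s `<=` F t).

Definition meas_wrt (R : realType) (dO : measure_display) (O : measurableType dO)
  (G : set (set O)) (X : O -> R) : Prop :=
  forall B : set R, measurable B -> G (X @^-1` B).

Definition adapted (R : realType) (dO : measure_display) (O : measurableType dO)
  (F : R -> set (set O)) (Y : R -> O -> R) : Prop :=
  forall t, meas_wrt (F t) (Y t).

Definition prog_meas (R : realType) (T : R) (dO : measure_display)
  (O : measurableType dO) (F : R -> set (set O)) (G : R -> O -> R) : Prop :=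
  forall t, 0 <= t <= T -> forall B : set R, measurable B ->
    <<s [set: R * O],
        [set AC | exists (A : set R) (C : set O),
           [/\ measurable A, A `<=` [set s | 0 <= s <= t], F t C & AC = A `*` C]] >>
      [set p : R * O | 0 <= p.1 <= t /\ B (G p.1 p.2)].

Definition cond_exp_version (R : realType) (dO : measure_display)
  (O : measurableType dO) (P : probability O R) (Ft : set (set O)) (X G : O -> R)
  : Prop :=
  [/\ meas_wrt Ft G, P.-integrable setT (fun w => (G w)%:E) &
      forall A, Ft A -> (\int[P]_(w in A) (G w)%:E = \int[P]_(w in A) (X w)%:E)%E].

Definition MS_i (R : realType) (T : R) (n d k : nat)
  (nu : 'I_k -> {measure set R -> \bar R})
  (dO : measure_display) (O : measurableType dO) (P : probability O R)
  (F : R -> set (set O)) (f : gen_type R n d k) : Prop :=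
  forall x y z psi (Y : R -> O -> R),
    L2fun nu psi -> adapted F Y -> (forall w, cadlag T (fun v => Y v w)) ->
    (forall t, 0 <= t <= T ->
       P.-integrable setT (fun w => (f t x (fun v => Y v w) y z psi)%:E)) ->
    exists G : R -> O -> R, prog_meas T F G /\
      forall t, 0 <= t <= T ->
        cond_exp_version P (F t) (fun w => f t x (fun v => Y v w) y z psi) (G t).

Definition MS_ii (R : realType) (T : R) (n d k : nat)
  (nu : 'I_k -> {measure set R -> \bar R}) (f : gen_type R n d k)
  (beta delta gamma : R) (l : R -> R) : Prop :=
  forall x q y z psi, cadlag T q -> L2fun nu psi ->
    {ae lebesgue_measure, forall t, 0 <= t <= T ->
      ((- l t - delta * supab t T q - beta * `|y| - gamma / 2 * enorm z ^+ 2)%:E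
         - intE nu (jfun gamma) (fun i e => (- psi i e)%R)
       <= (f t x q y z psi)%:E)%E /\
      ((f t x q y z psi)%:E
       <= (l t + delta * supab t T q + beta * `|y| + gamma / 2 * enorm z ^+ 2)%:E
          + intE nu (jfun gamma) psi)%E}.

Definition MS_iii (R : realType) (T : R) (n : nat) (xi : 'rV[R]_n -> R)
  (l : R -> R) : Prop :=
  (exists C, forall x, `|xi x| <= C) /\ (exists C, forall t, 0 <= t <= T -> l t <= C).

Definition MS_consts (R : realType) (T : R) (n d k : nat)
  (nu : 'I_k -> {measure set R -> \bar R}) (f : gen_type R n d k)
  (xi : 'rV[R]_n -> R) (beta delta gamma : R) (l : R -> R) : Prop :=
  [/\ [/\ 0 <= beta, 0 <= delta & 0 < gamma], (forall t, 0 <= t <= T -> 0 < l t),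
      MS_ii T nu f beta delta gamma l & MS_iii T xi l].

Definition MS (R : realType) (T : R) (n d k : nat)
  (nu : 'I_k -> {measure set R -> \bar R})
  (dO : measure_display) (O : measurableType dO) (P : probability O R)
  (F : R -> set (set O)) (f : gen_type R n d k) (xi : 'rV[R]_n -> R) : Prop :=
  MS_i T nu P F f /\ exists beta delta gamma l, MS_consts T nu f xi beta delta gamma l.

Definition ML_consts (R : realType) (T : R) (n d k : nat)
  (nu : 'I_k -> {measure set R -> \bar R}) (f : gen_type R n d k)
  (xi : 'rV[R]_n -> R) (K : R -> R) (Kxi rho alpha : R) : Prop :=
  [/\ (forall M, 0 < M -> 0 < K M), [/\ 0 <= Kxi, 0 <= rho & 0 < alpha <= 1],
      (forall M, 0 < M ->
       forall x x' q q' y y' z z' psi psi',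
         cadlag T q -> cadlag T q' -> L2fun nu psi -> L2fun nu psi' ->
         `|y| <= M -> `|y'| <= M ->
         (Linfnorm nu psi <= M%:E)%E -> (Linfnorm nu psi' <= M%:E)%E ->
         supab 0 T q <= M -> supab 0 T q' <= M ->
         {ae lebesgue_measure, forall t, 0 <= t <= T ->
           `|f t x q y z psi - f t x q' y' z' psi'|
             <= K M * (supab t T (fun v => q v - q' v) + `|y - y'|
                       + L2norm nu (sub_psi psi psi'))
                + K M * (1 + enorm z + enorm z' + L2norm nu psi + L2norm nu psi')
                      * enorm (z - z')
           /\
           `|f t x q y z psi - f t x' q y z psi|
             <= K M * (1 + (Num.max (enorm x) (enorm x')) `^ rho + enorm z ^+ 2
                       + L2norm nu psi ^+ 2) * (enorm (x - x')) `^ alpha})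
    & forall x x', `|xi x - xi x'| <= Kxi * (enorm (x - x')) `^ alpha].

Definition ML (R : realType) (T : R) (n d k : nat)
  (nu : 'I_k -> {measure set R -> \bar R}) (f : gen_type R n d k)
  (xi : 'rV[R]_n -> R) : Prop :=
  exists K Kxi rho alpha, ML_consts T nu f xi K Kxi rho alpha.

(* Main.v *)
Require Import Defs.
From HB Require Import structures.
From mathcomp Require Import all_boot all_order all_algebra.
From mathcomp Require Import all_classical all_reals all_analysis.
From mathcomp Require Import ess_sup_inf.
From mathcomp Require Import lra ring.
Import Order.TTheory GRing.Theory Num.Def Num.Theory.
Import numFieldNormedType.Exports.
Local Open Scope classical_set_scope.
Local Open Scope ring_scope.


Unset Implicit Arguments. Set Strict Implicit.

Section Phi.
Variable R : realType.
Implicit Types x y u v : R.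

Lemma phi_cases (m : nat) x :
  [\/ (- m%:R <= x <= m%:R) /\ phi m x = x,
      (m%:R < x) /\ phi m x = m%:R | (x < - m%:R) /\ phi m x = - m%:R].
Proof.
have m0 : (0 : R) <= m%:R by rewrite ler0n.
rewrite /phi maxEle minEle.
have [h1|h1] := leP x m%:R.
  have [h2|h2] := leP (- m%:R) x.
    by apply: Or31; split => //; apply/andP.
  by apply: Or33; split.
have [h2|h2] := leP (- m%:R) (m%:R : R); first by apply: Or32.
exfalso; lra.
Qed.

Lemma normle x y : (`|x| <= y) <-> (- y <= x <= y).
Proof. by rewrite ler_norml. Qed.

Lemma phi_bound m x : `|phi m x| <= m%:R.
Proof.
have m0 : (0 : R) <= m%:R by rewrite ler0n.
apply/normle; case: (phi_cases m x) => [[/andP[h1 h2] ->]|[h ->]|[h ->]]; apply/andP; split; lra.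
Qed.

Lemma phi_sign m x : (0 <= x -> 0 <= phi m x <= x) /\ (x <= 0 -> x <= phi m x <= 0).
Proof.
have m0 : (0 : R) <= m%:R by rewrite ler0n.
case: (phi_cases m x) => [[/andP[h1 h2] ->]|[h ->]|[h ->]]; split => hx; apply/andP; split; lra.
Qed.

Lemma abs_le_sign x y : (0 <= y -> 0 <= x <= y) -> (y <= 0 -> y <= x <= 0) -> `|x| <= `|y|.
Proof.
move=> h1 h2; have [hy|hy] := leP 0 y.
  have /andP[a b] := h1 hy; rewrite !ger0_norm //.
have /andP[a b] := h2 (ltW hy); rewrite !ler0_norm //; [lra|exact: ltW].
Qed.

Lemma phi_abs m x : `|phi m x| <= `|x|.
Proof. by case: (phi_sign m x) => h1 h2; apply: abs_le_sign. Qed.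

Lemma phi_lip m x y : `|phi m x - phi m y| <= `|x - y|.
Proof.
have m0 : (0 : R) <= m%:R by rewrite ler0n.
have [hxy|hxy] := leP y x.
  rewrite (ger0_norm (x:=x - y)); last lra.
  apply/normle; case: (phi_cases m x) => [[/andP[h1 h2] ->]|[h ->]|[h ->]];
  case: (phi_cases m y) => [[/andP[h3 h4] ->]|[h' ->]|[h' ->]]; apply/andP; split; lra.
rewrite (ler0_norm (x:=x - y)); last lra.
apply/normle; case: (phi_cases m x) => [[/andP[h1 h2] ->]|[h ->]|[h ->]];
case: (phi_cases m y) => [[/andP[h3 h4] ->]|[h' ->]|[h' ->]]; apply/andP; split; lra.
Qed.

Lemma phiN m x : phi m (- x) = - phi m x.
Proof.
have m0 : (0 : R) <= m%:R by rewrite ler0n.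
case: (phi_cases m x) => [[/andP[h1 h2] ->]|[h ->]|[h ->]];
case: (phi_cases m (- x)) => [[/andP[h3 h4] ->]|[h' ->]|[h' ->]]; lra.
Qed.

Lemma phi_cont m : continuous (@phi R m).
Proof.
move=> x; apply/cvgrPdist_le => e e0; near=> y.
apply: le_trans (phi_lip m x y) _.
by near: y; apply: (cvgrPdist_le _ _).1 => //; exact: cvg_id.
Unshelve. all: by end_near. Qed.

Lemma jfun_ge0 g u : 0 < g -> 0 <= jfun g u.
Proof.
move=> g0; rewrite /jfun divr_ge0 ?(ltW g0) //.
have := expR_ge1Dx (g * u); lra.
Qed.

Lemma jfun0 (g : R) : jfun g 0 = 0.
Proof. by rewrite /jfun mulr0 expR0 subrr sub0r oppr0 mul0r. Qed.

Lemma jfun_mono g u v : 0 < g -> (0 <= v <= u \/ u <= v <= 0) -> jfun g v <= jfun g u.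
Proof.
move=> g0 h; rewrite /jfun ler_pM2r ?invr_gt0 //.
set a := g * v; set b := g * u.
suff : expR a - a <= expR b - b by lra.
have eb : expR b = expR a * expR (b - a) by rewrite -expRD addrC subrK.
rewrite eb; set A := expR a; set E := expR (b - a).
have hE : 1 + (b - a) <= E := expR_ge1Dx (b - a).
have A0 : 0 < A := expR_gt0 a.
case: h => /andP[h1 h2].
- have ha : 0 <= a by rewrite /a mulr_ge0 ?(ltW g0).
  have hab : a <= b by rewrite /a /b ler_pM2l.
  have e1 : 1 <= A by have := expR_ge1Dx a; rewrite /A; lra.
  have h3 : 1 * (E - 1) <= A * (E - 1) by rewrite ler_wpM2r //; lra.
  rewrite mul1r mulrBr mulr1 in h3; lra.
- have ha : a <= 0 by rewrite /a mulr_ge0_le0 ?(ltW g0).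
  have hab : b <= a by rewrite /a /b ler_pM2l.
  have e1 : A <= 1 by rewrite /A -expR0 ler_expR.
  have h3 : A * (b - a) <= A * (E - 1) by rewrite ler_wpM2l ?(ltW A0) //; lra.
  have h4 : 0 <= (1 - A) * (a - b) by rewrite mulr_ge0 //; lra.
  rewrite !mulrBr mulr1 in h3; rewrite mulrBl mul1r !mulrBr in h4.
  lra.
Qed.

End Phi.

Lemma sq_le (R : realType) (x y : R) : `|x| <= `|y| -> x ^+ 2 <= y ^+ 2.
Proof.
move=> h; rewrite -(real_normK (num_real x)) -(real_normK (num_real y)).
by rewrite ler_pXn2r // nnegrE.
Qed.

Section Enorm.
Variable R : realType.

Lemma enorm_ge0 p (x : 'rV[R]_p) : 0 <= enorm x.
Proof. exact: sqrtr_ge0. Qed.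

Lemma enorm_le p (a b : 'rV[R]_p) :
  (forall i, `|a ord0 i| <= `|b ord0 i|) -> enorm a <= enorm b.
Proof.
move=> h; rewrite /enorm ler_sqrt; last by apply: sumr_ge0 => i _; exact: sqr_ge0.
by apply: ler_sum => i _; apply: sq_le.
Qed.

Lemma enorm_bound p (a : 'rV[R]_p) (c : R) :
  (forall i, `|a ord0 i| <= c) -> enorm a <= Num.sqrt (\sum_(i < p) c ^+ 2).
Proof.
move=> h; rewrite /enorm ler_sqrt; last by apply: sumr_ge0 => i _; exact: sqr_ge0.
apply: ler_sum => i _; apply: sq_le.
have c0 : 0 <= c by apply: le_trans (h i).
by rewrite (ger0_norm c0).
Qed.

End Enorm.


Unset Implicit Arguments. Set Strict Implicit.

Lemma norm_near (R : realType) (a b c : R) : `|a - b| <= c -> `|a| <= `|b| + c.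
Proof.
move=> h; rewrite -[a](subrK b); apply: (le_trans (ler_normD _ _)).
by rewrite addrC lerD2l.
Qed.

Lemma loc_bound (R : realType) (T : R) (g : R -> R) x : cadlag T g -> 0 <= x <= T ->
  exists B, \forall s \near x, 0 <= s <= T -> `|g s| <= B.
Proof.
move=> [rc ll] /andP[x0 xT].
have R1 : \forall s \near x, x < s -> s <= T -> `|g s| <= `|g x| + 1.
  have [xlt|xeq] := ltP x T.
    have hx : 0 <= x < T by rewrite x0 xlt.
    have := rc x hx => /cvgrPdist_le /(_ 1 ltr01).
    rewrite near_withinE. apply: filterS => s h xs sT. 
    by move: (h xs); rewrite distrC; exact: norm_near.
  by exists 1 => //= s _ xs sT; exfalso; lra.
have [l R2] : exists l : R, \forall s \near x, s < x -> 0 <= s -> `|g s| <= `|l| + 1.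
  have [x0'|x0'] := ltP 0 x.
    have hx : 0 < x <= T by rewrite x0' xT.
    have [l hl] := ll x hx; exists l.
    have := hl => /cvgrPdist_le /(_ 1 ltr01).
    rewrite near_withinE; apply: filterS => s h xs s0.
    by move: (h xs); rewrite distrC; exact: norm_near.
  by exists 0, 1 => //= s _ xs s0; exfalso; lra.
exists (`|g x| + 1 + `|l| + 1).
near=> s => /andP[s0 sT].
have H1 : x < s -> s <= T -> `|g s| <= `|g x| + 1 by near: s; exact: R1.
have H2 : s < x -> 0 <= s -> `|g s| <= `|l| + 1 by near: s; exact: R2.
have h1 := normr_ge0 (g x); have h2 := normr_ge0 l.
have [xs|sx|<-] := ltgtP x s.
- have := H1 xs sT; lra.
- have := H2 sx s0; lra.
- lra.
Unshelve. all: by end_near.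
Qed.

Lemma cadlag_bounded (R : realType) (T : R) (g : R -> R) : cadlag T g ->
  exists M, forall v, 0 <= v <= T -> `|g v| <= M.
Proof.
move=> cg.
have NC : near_covering_within `[0, T] :=
  (near_covering_withinP _).2 ((compact_near_coveringP _).1 (@segment_compact R 0 T)).
have := @NC R (pinfty_nbhs R) (fun M v => `|g v| <= M) _.
case.
  move=> x; rewrite /= in_itv /= => hx.
  have [B HB] := @loc_bound R T g x cg hx.
  exists (fun s => 0 <= s <= T -> `|g s| <= B, [set M | B < M]) => /=.
    split => //; exists B; split => //; exact: num_real.
  move=> [a b] [/= ha hb]; rewrite in_itv /= => hK.
  by apply: le_trans (ha hK) (ltW hb).
move=> M [_ HM]; exists (M + 1) => v hv; apply: (HM (M + 1)); first lra.
by rewrite /= in_itv.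
Qed.

Lemma supab_ge0 (R : realType) (a b : R) g : 0 <= supab a b g.
Proof.
rewrite /supab.
have [hs|hs] := pselect (has_sup [set `|g v| | v in [set v | a <= v <= b]]).
  case: (hs) => [[y [v hv _]] _].
  apply: le_trans (normr_ge0 (g v)) _.
  by apply: (sup_upper_bound hs); exists v.
by rewrite sup_out.
Qed.

Lemma supab_bound (R : realType) (a b : R) g c : a <= b ->
  (forall v, a <= v <= b -> `|g v| <= c) -> supab a b g <= c.
Proof.
move=> ab h; apply: ge_sup.
  by exists `|g a|, a => //=; rewrite lexx ab.
by move=> y [v hv <-]; apply: h.
Qed.

Lemma supab_le (R : realType) (a b : R) g h : a <= b ->
  (exists M, forall v, a <= v <= b -> `|g v| <= M) ->
  (forall v, a <= v <= b -> `|h v| <= `|g v|) -> supab a b h <= supab a b g.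
Proof.
move=> ab [M hM] hgh; apply: supab_bound => // v hv.
apply: le_trans (hgh v hv) _.
apply: sup_upper_bound; last by exists v.
split; first by exists `|g a|, a => //=; rewrite lexx ab.
by exists M => y [w hw <-]; apply: hM.
Qed.

Lemma cadlag_comp (R : realType) (T : R) g (h : R -> R) : continuous h ->
  cadlag T g -> cadlag T (fun v => h (g v)).
Proof.
move=> ch [rc ll]; split.
  by move=> t ht; apply: (continuous_cvg _ (ch (g t))); exact: rc.
move=> t ht; have [l hl] := ll t ht; exists (h l).
by apply: (continuous_cvg _ (ch l)).
Qed.


Unset Implicit Arguments. Set Strict Implicit.

Section Meas.
Variable R : realType.

Definition ind (c e : R) : R := if c <= `|e| then 1 else 0.

Lemma measurable_ind c : measurable_fun setT (ind c).
Proof.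
have -> : ind c = \1_[set e | c <= `|e|].
  apply/funext => e; rewrite /ind indicE.
  case: ifP => h; first by rewrite mem_set.
  by rewrite memNset //= h.
apply: measurable_realfun.measurable_indic.
have := @measurable_realfun.normr_measurable R setT measurableT [set x | c <= x] (measurable_realfun.closed_measurable (@closed_ge R c)).
by rewrite setTI.
Qed.

Definition trn k (m : nat) (psi : 'I_k -> R -> R) : 'I_k -> R -> R :=
  fun i e => phi m (psi i e * ind (m%:R)^-1 e).
Arguments trn {k}.

Lemma measurable_trunc k m (psi : 'I_k -> R -> R) i :
  measurable_fun setT (psi i) -> measurable_fun setT (trn m psi i).
Proof.
move=> mp; rewrite /trn.
have h1 := measurable_realfun.continuous_measurable_fun (@phi_cont R m).
have h2 : measurable_fun setT (fun e => psi i e * ind (m%:R)^-1 e) :=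
  measurable_realfun.measurable_funM mp (measurable_ind _).
exact: (measurableT_comp h1 h2).
Qed.

Lemma ind01 c e : ind c e = 0 \/ ind c e = 1.
Proof. by rewrite /ind; case: ifP; [right|left]. Qed.

Lemma trunc_abs k m (psi : 'I_k -> R -> R) i e : `|trn m psi i e| <= `|psi i e|.
Proof.
rewrite /trn; apply: le_trans (phi_abs _ _ _) _.
by case: (ind01 (m%:R)^-1 e) => ->; rewrite ?mulr0 ?mulr1 ?normr0.
Qed.

Lemma trunc_sub k m (psi psi' : 'I_k -> R -> R) i e :
  `|trn m psi i e - trn m psi' i e| <= `|sub_psi psi psi' i e|.
Proof.
rewrite /trn /sub_psi /=; apply: le_trans (phi_lip _ _ _ _) _.
by case: (ind01 (m%:R)^-1 e) => ->; rewrite ?mulr0 ?mulr1 ?subrr ?normr0.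
Qed.

Lemma trunc_bound k m (psi : 'I_k -> R -> R) i e : `|trn m psi i e| <= m%:R.
Proof. exact: phi_bound. Qed.

Lemma trunc_small k m (psi : 'I_k -> R -> R) i e : `|e| < (m%:R)^-1 ->
  trn m psi i e = 0.
Proof.
move=> h; rewrite /trn /ind; case: ifP => h'; first by exfalso; lra.
rewrite mulr0; have := @phi_abs R m 0.
by rewrite normr0 normr_le0 => /eqP.
Qed.

Lemma truncN k m (psi : 'I_k -> R -> R) i e :
  - trn m psi i e = trn m (fun i e => - psi i e) i e.
Proof. by rewrite /trn mulNr phiN. Qed.

Lemma trunc_sign k m (psi : 'I_k -> R -> R) i e :
  (0 <= trn m psi i e <= psi i e) \/ (psi i e <= trn m psi i e <= 0).
Proof.
rewrite /trn; case: (ind01 (m%:R)^-1 e) => ->; rewrite ?mulr0 ?mulr1.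
  have := @phi_sign R m 0; rewrite lexx => -[h1 h2].
  have /andP[a b] := h1 isT; have /andP[c d] := h2 isT.
  have -> : phi m 0 = (0:R) by apply/eqP; rewrite eq_le; apply/andP; split.
  have [hp|hp] := leP 0 (psi i e); [left|right]; apply/andP; split => //; exact: ltW.
have [hp|hp] := leP 0 (psi i e).
  by left; apply: (@phi_sign R m (psi i e)).1.
by right; apply: (@phi_sign R m (psi i e)).2; exact: ltW.
Qed.

End Meas.
Arguments trn {R k}.


Unset Implicit Arguments. Set Strict Implicit.
Set Implicit Arguments. Unset Strict Implicit.

Lemma meas_scale (R : realType) (f : R -> R) (c : R) : measurable_fun setT f ->
  measurable_fun setT (fun x => c * f x).
Proof. move=> mf. exact: (measurable_realfun.measurable_funM (measurable_cst c) mf). Qed.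

Lemma meas_normsq (R : realType) : measurable_fun setT (fun e : R => `|e| ^+ 2).
Proof.
have h : measurable_fun setT (fun e : R => `|e|) := @measurable_realfun.normr_measurable R setT.
exact: (measurable_realfun.measurable_funX 2 h).
Qed.

Section Integ.
Variable R : realType.
Variable mu : {measure set R -> \bar R}.

Lemma int_le (f g : R -> R) : measurable_fun setT f -> measurable_fun setT g ->
  (forall e, 0 <= f e <= g e) ->
  (\int[mu]_e (f e)%:E <= \int[mu]_e (g e)%:E)%E.
Proof.
move=> mf mg h; apply: ge0_le_integral => //.
- by move=> e _; rewrite lee_fin; case/andP: (h e).
- exact/measurable_realfun.measurable_EFinP.
- exact/measurable_realfun.measurable_EFinP.
- by move=> e _; rewrite lee_fin; case/andP: (h e).
Qed.

Lemma int_ge0 (f : R -> R) : (forall e, 0 <= f e) -> (0 <= \int[mu]_e (f e)%:E)%E.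
Proof. by move=> h; apply: integral_ge0 => e _; rewrite lee_fin. Qed.

Lemma int_sq_le (a b : R -> R) : measurable_fun setT a -> measurable_fun setT b ->
  (forall e, `|a e| <= `|b e|) ->
  (\int[mu]_e (a e ^+ 2)%:E <= \int[mu]_e (b e ^+ 2)%:E)%E.
Proof.
move=> ma mb h; apply: int_le.
- exact: measurable_realfun.measurable_funX.
- exact: measurable_realfun.measurable_funX.
- by move=> e; rewrite sqr_ge0 /=; apply: sq_le.
Qed.

Lemma int_scale_fin (f : R -> R) (c : R) : measurable_fun setT f -> 0 <= c ->
  (forall e, 0 <= f e) ->
  (\int[mu]_e (f e)%:E < +oo)%E -> (\int[mu]_e (c * f e)%:E < +oo)%E.
Proof.
move=> mf c0 f0 fin.
under eq_integral do rewrite EFinM.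
rewrite ge0_integralZl_EFin //.
- by apply: lte_mul_pinfty; rewrite ?lee_fin.
- by move=> e _; rewrite lee_fin.
- exact/measurable_realfun.measurable_EFinP.
Qed.

Lemma int_add_fin (f g : R -> R) : measurable_fun setT f -> measurable_fun setT g ->
  (forall e, 0 <= f e) -> (forall e, 0 <= g e) ->
  (\int[mu]_e (f e)%:E < +oo)%E -> (\int[mu]_e (g e)%:E < +oo)%E ->
  (\int[mu]_e (f e + g e)%:E < +oo)%E.
Proof.
move=> mf mg f0 g0 ff fg.
under eq_integral do rewrite EFinD.
rewrite ge0_integralD //.
- exact: lte_add_pinfty.
- by move=> e _; rewrite lee_fin.
- exact/measurable_realfun.measurable_EFinP.
- by move=> e _; rewrite lee_fin.
- exact/measurable_realfun.measurable_EFinP.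
Qed.

End Integ.

Section Multi.
Variable R : realType.
Variable k : nat.
Variable nu : 'I_k -> {measure set R -> \bar R}.

Lemma L2fun_le (a b : 'I_k -> R -> R) : (forall i, measurable_fun setT (a i)) ->
  L2fun nu b -> (forall i e, `|a i e| <= `|b i e|) -> L2fun nu a.
Proof.
move=> ma hb h i; split => //; have [mb fb] := hb i.
by apply: le_lt_trans fb; apply: int_sq_le.
Qed.

Lemma L2sum_fin (b : 'I_k -> R -> R) : L2fun nu b ->
  (\sum_(i < k) \int[nu i]_e ((b i e) ^+ 2)%:E)%E \is a fin_num.
Proof.
move=> hb; rewrite ge0_fin_numE.
  by apply: lte_sum_pinfty => i _; case: (hb i).
by apply: sume_ge0 => i _; apply: int_ge0 => e; exact: sqr_ge0.
Qed.

Lemma L2norm_ge0 (a : 'I_k -> R -> R) : 0 <= L2norm nu a.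
Proof. exact: sqrtr_ge0. Qed.

Lemma L2norm_le (a b : 'I_k -> R -> R) : (forall i, measurable_fun setT (a i)) ->
  L2fun nu b -> (forall i e, `|a i e| <= `|b i e|) -> L2norm nu a <= L2norm nu b.
Proof.
move=> ma hb h; have ha := L2fun_le ma hb h.
rewrite /L2norm ler_sqrt; last first.
  by apply: fine_ge0; apply: sume_ge0 => i _; apply: int_ge0 => e; exact: sqr_ge0.

have HH := fine_le (L2sum_fin ha) (L2sum_fin hb); apply: HH.
apply: lee_sum => i _; apply: int_sq_le; [exact: ma | by case: (hb i) | exact: h].
Qed.

Lemma L2fun_sub (a b : 'I_k -> R -> R) : L2fun nu a -> L2fun nu b ->
  L2fun nu (sub_psi a b).
Proof.
move=> ha hb i; have [ma fa] := ha i; have [mb fb] := hb i.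
have mab : measurable_fun setT (sub_psi a b i) := measurable_realfun.measurable_funB ma mb.
split => //.
have mx2 : forall f : R -> R, measurable_fun setT f -> measurable_fun setT (fun x => f x ^+ 2).
  by move=> f mf; exact: measurable_realfun.measurable_funX.
apply: (@le_lt_trans _ _ (\int[nu i]_e ((2 * (a i e ^+ 2)) + (2 * (b i e ^+ 2)))%:E)%E).
  apply: int_le.
  - exact: mx2.
  - apply: measurable_realfun.measurable_funD.
      exact: (meas_scale 2 (mx2 _ ma)).
    exact: (meas_scale 2 (mx2 _ mb)).
  - move=> e; rewrite sqr_ge0 /= /sub_psi.
    have := sqr_ge0 (a i e + b i e); rewrite !expr2; nra.
apply: int_add_fin.
- exact: (meas_scale 2 (mx2 _ ma)).
- exact: (meas_scale 2 (mx2 _ mb)).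
- by move=> e; rewrite mulr_ge0 ?sqr_ge0.
- by move=> e; rewrite mulr_ge0 ?sqr_ge0.
- by apply: int_scale_fin => //; [exact: mx2|move=> e; exact: sqr_ge0].
- by apply: int_scale_fin => //; [exact: mx2|move=> e; exact: sqr_ge0].
Qed.

Lemma L2fun_trunc m (psi : 'I_k -> R -> R) : L2fun nu psi -> L2fun nu (trn m psi).
Proof.
move=> hp; apply: (L2fun_le _ hp) => [i|i e]; last exact: trunc_abs.
by apply: measurable_trunc; case: (hp i).
Qed.

Lemma L2fun_lin (c : R) : (forall i, (\int[nu i]_e (`|e| ^+ 2)%:E < +oo)%E) ->
  L2fun nu (fun i e => c * e).
Proof.
move=> hn i; split.
  by apply: (@meas_scale R (fun e => e) c); exact: measurable_id.
under eq_integral => e _ do rewrite exprMn -(real_normK (num_real e)).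
apply: int_scale_fin => //.
- exact: meas_normsq.
- exact: sqr_ge0.
Qed.

Lemma intE_le (g : R -> R) (a b : 'I_k -> R -> R) : measurable_fun setT g ->
  (forall i, measurable_fun setT (a i)) -> (forall i, measurable_fun setT (b i)) ->
  (forall i e, 0 <= g (a i e) <= g (b i e)) -> (intE nu g a <= intE nu g b)%E.
Proof.
move=> mg ma mb h; apply: lee_sum => i _; apply: int_le => //.
- exact: (measurableT_comp mg (ma i)).
- exact: (measurableT_comp mg (mb i)).
Qed.

Lemma intE_ge0 (g : R -> R) (a : 'I_k -> R -> R) : (forall i e, 0 <= g (a i e)) ->
  (0 <= intE nu g a)%E.
Proof. by move=> h; apply: sume_ge0 => i _; apply: int_ge0. Qed.

Lemma intE_bound (g : R -> R) (a : 'I_k -> R -> R) (c : R) :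
  (forall i, (\int[nu i]_e (`|e| ^+ 2)%:E < +oo)%E) -> 0 <= c ->
  measurable_fun setT g -> (forall i, measurable_fun setT (a i)) ->
  (forall i e, 0 <= g (a i e) <= c * `|e| ^+ 2) ->
  (intE nu g a <= (fine (\sum_(i < k) \int[nu i]_e (c * `|e| ^+ 2)%:E)%E)%:E)%E.
Proof.
move=> hn c0 mg ma h.
have mn : measurable_fun setT (fun e : R => c * `|e| ^+ 2).
  apply: meas_scale.
  exact: meas_normsq.
have fin : (\sum_(i < k) \int[nu i]_e (c * `|e| ^+ 2)%:E)%E \is a fin_num.
  rewrite ge0_fin_numE; last first.
    by apply: sume_ge0 => i _; apply: int_ge0 => e; rewrite mulr_ge0 ?sqr_ge0.
  apply: lte_sum_pinfty => i _; apply: int_scale_fin => //; first exact: meas_normsq.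
  all: try by move=> e; exact: sqr_ge0.
rewrite fineK //.
apply: lee_sum => i _; apply: int_le => //.
exact: (measurableT_comp mg (ma i)).
Qed.

Lemma Linfnorm_le (a b : 'I_k -> R -> R) : (forall i e, `|a i e| <= `|b i e|) ->
  (Linfnorm nu a <= Linfnorm nu b)%E.
Proof.
move=> h; apply: le_bigmax2 => i _; apply: le_ess_sup.
by apply: aeW => e; rewrite lee_fin.
Qed.

Lemma Linfnorm_bound (a : 'I_k -> R -> R) (c : R) : 0 <= c ->
  (forall i e, `|a i e| <= c) -> (Linfnorm nu a <= c%:E)%E.
Proof.
move=> c0 h; apply: bigmax_le; first by rewrite lee_fin.
move=> i _; apply/ess_supP; apply: aeW => e; rewrite lee_fin; exact: h.
Qed.

End Multi.


Unset Implicit Arguments. Set Strict Implicit.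
Set Implicit Arguments. Unset Strict Implicit.

Section J.
Variable R : realType.

Lemma measN (f : R -> R) : measurable_fun setT f -> measurable_fun setT (fun x => - f x).
Proof.
move=> mf; have -> : (fun x => - f x) = (fun x => -1 * f x).
  by apply/funext => x; rewrite mulN1r.
exact: meas_scale.
Qed.

Lemma measurable_jfun (g : R) : measurable_fun setT (jfun g).
Proof.
have h1 : measurable_fun setT (fun u : R => g * u).
  by apply: (@meas_scale R (fun e => e) g); exact: measurable_id.
have h2 : measurable_fun setT (fun u : R => expR (g * u)).
  exact: (measurableT_comp (@measurable_realfun.measurable_expR R) h1).
have h3 : measurable_fun setT (fun u : R => expR (g * u) - 1).
  exact: (measurable_realfun.measurable_funB h2 (measurable_cst (1:R))).
have h4 : measurable_fun setT (fun u : R => expR (g * u) - 1 - g * u).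
  exact: (measurable_realfun.measurable_funB h3 h1).
exact: (measurable_realfun.measurable_funM h4 (measurable_cst (g^-1))).
Qed.

Lemma jfun_le_J (g : R) (m : nat) v : 0 < g -> `|v| <= m%:R ->
  jfun g v <= jfun g m%:R + jfun g (- m%:R).
Proof.
move=> g0 /normle /andP[h1 h2].
have [hv|hv] := leP 0 v.
  have := @jfun_mono R g m%:R v g0 (or_introl (introT andP (conj hv h2))).
  have := @jfun_ge0 R g (- m%:R) g0; lra.
have := @jfun_mono R g (- m%:R) v g0 (or_intror (introT andP (conj h1 (ltW hv)))).
have := @jfun_ge0 R g m%:R g0; lra.
Qed.

Lemma jtrn_bound k (g : R) (m : nat) (psi : 'I_k -> R -> R) i e : 0 < g -> (0 < m)%N ->
  0 <= jfun g (trn m psi i e) <=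
  ((jfun g m%:R + jfun g (- m%:R)) * m%:R ^+ 2) * `|e| ^+ 2.
Proof.
move=> g0 m0; rewrite jfun_ge0 //=.
have J0 : 0 <= jfun g m%:R + jfun g (- m%:R) by rewrite addr_ge0 ?jfun_ge0.
have mpos : (0:R) < m%:R by rewrite ltr0n.
have [he|he] := ltP `|e| (m%:R)^-1.
  rewrite (@trunc_small R k m psi i e he) jfun0; apply: mulr_ge0; first by rewrite mulr_ge0 ?sqr_ge0.
  exact: sqr_ge0.
apply: le_trans (jfun_le_J g0 (@trunc_bound R k m psi i e)) _.
rewrite -mulrA ler_peMr //.
have h1 : 1 <= m%:R * `|e|.
  by have := ler_wpM2l (ltW mpos) he; rewrite mulfV ?lt0r_neq0.
rewrite -exprMn; have := @sq_le R 1 (m%:R * `|e|).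
rewrite expr1n; apply; rewrite normr1 ger0_norm // mulr_ge0 // ltW.
Qed.

Lemma trn_lin k (m : nat) (psi : 'I_k -> R -> R) i e : (0 < m)%N ->
  `|trn m psi i e| <= `|m%:R ^+ 2 * e|.
Proof.
move=> m0; have mpos : (0:R) < m%:R by rewrite ltr0n.
have [he|he] := ltP `|e| (m%:R)^-1.
  by rewrite (@trunc_small R k m psi i e he) normr0.
apply: le_trans (@trunc_bound R k m psi i e) _.
have h1 : 1 <= m%:R * `|e|.
  by have := ler_wpM2l (ltW mpos) he; rewrite mulfV ?lt0r_neq0.
rewrite normrM ger0_norm ?sqr_ge0 // expr2 -mulrA.
by have := ler_wpM2l (ltW mpos) h1; rewrite mulr1.
Qed.

End J.


Unset Implicit Arguments. Set Strict Implicit.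

Lemma partA (R : realType) (T : R) (d k n : nat)
  (nu : 'I_k -> {measure set R -> \bar R})
  (dO : measure_display) (O : measurableType dO) (P : probability O R)
  (F : R -> set (set O)) (f : gen_type R n d k) m :
  MS_i T nu P F f -> MS_i T nu P F (fm f m).
Proof.
move=> MSi x y z psi Y hpsi hY hcad hint.
have hA : adapted F (fun v w => phi m (Y v w)).
  move=> t B mB.
  have mphi := measurable_realfun.continuous_measurable_fun (@phi_cont R m).
  have := mphi measurableT B mB; rewrite setTI => mB'.
  exact: (hY t _ mB').
have hC : forall w, cadlag T (fun v => phi m (Y v w)).
  by move=> w; apply: cadlag_comp; [exact: phi_cont | exact: hcad].
exact: (MSi x (phi m y) (map_mx (phi m) z) (trn m psi) (fun v w => phi m (Y v w))
   (L2fun_trunc m hpsi) hA hC hint).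
Qed.

Lemma partB (R : realType) (T : R) (d k n : nat)
  (nu : 'I_k -> {measure set R -> \bar R}) (f : gen_type R n d k) m
  beta delta gamma (l : R -> R) :
  0 <= beta -> 0 <= delta -> 0 < gamma ->
  MS_ii T nu f beta delta gamma l -> MS_ii T nu (fm f m) beta delta gamma l.
Proof.
move=> b0 d0 g0 MSii x q y z psi cq hpsi.
have cq' := @cadlag_comp R T q (phi m) (@phi_cont R m) cq.
have hp' := L2fun_trunc m hpsi.
have [Mq hMq] := @cadlag_bounded R T q cq.
have H := MSii x _ (phi m y) (map_mx (phi m) z) _ cq' hp'.
move: H; apply: (@filterS _ _ (ae_filter_ringOfSetsType (@lebesgue_measure R))) => t H ht.
have [H1 H2] := H ht.
have /andP[t0 tT] := ht.
have hS : supab t T (fun v => phi m (q v)) <= supab t T q.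
  apply: supab_le => //.
    exists Mq => v /andP[tv vT]; apply: hMq; rewrite vT andbT; lra.
  by move=> v _; exact: phi_abs.
have hy : `|phi m y| <= `|y| := phi_abs _ _ _.
have hz : enorm (map_mx (phi m) z) <= enorm z.
  by apply: enorm_le => i; rewrite mxE; exact: phi_abs.
have hz2 : enorm (map_mx (phi m) z) ^+ 2 <= enorm z ^+ 2.
  by apply: sq_le; rewrite !ger0_norm ?enorm_ge0.
have g2 : 0 <= gamma / 2 by rewrite divr_ge0 // ltW.
have hS' := ler_wpM2l d0 hS; have hy' := ler_wpM2l b0 hy; have hz' := ler_wpM2l g2 hz2.
have mpsi : forall i, measurable_fun setT (psi i) by move=> i; case: (hpsi i).
have hI : (intE nu (jfun gamma) (trn m psi) <= intE nu (jfun gamma) psi)%E.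
  apply: intE_le; [exact: measurable_jfun | move=> i; exact: measurable_trunc | exact: mpsi | ].
  by move=> i e; rewrite jfun_ge0 //=; apply: jfun_mono => //; exact: trunc_sign.
have eqN : (fun i e => - trn m psi i e) = trn m (fun i e => - psi i e).
  by apply/funext => i; apply/funext => e; exact: truncN.
have hIN : (intE nu (jfun gamma) (fun i e => (- trn m psi i e)%R) <=
            intE nu (jfun gamma) (fun i e => (- psi i e)%R))%E.
  rewrite eqN; apply: intE_le.
  - exact: measurable_jfun.
  - by move=> i; apply: measurable_trunc; exact: measN.
  - by move=> i; exact: measN.
  - by move=> i e; rewrite jfun_ge0 //=; apply: jfun_mono => //; exact: trunc_sign.
split.
- apply: le_trans H1; apply: leeB => //; rewrite lee_fin; lra.
- apply: le_trans H2 _; apply: leeD => //; rewrite lee_fin; lra.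
Qed.

Lemma partC (R : realType) (T : R) (d k n : nat)
  (nu : 'I_k -> {measure set R -> \bar R}) (f : gen_type R n d k) (xi : 'rV[R]_n -> R) m
  (K : R -> R) Kxi rho alpha : 0 < T ->
  ML_consts T nu f xi K Kxi rho alpha -> ML_consts T nu (fm f m) xi K Kxi rho alpha.
Proof.
move=> T0; case=> Kp hc MLf hxi; split => //.
move=> M M0 x x' q q' y y' z z' psi psi' cq cq' hp hp' hy hy' hL hL' hsq hsq'.
have cqm := @cadlag_comp R T q (phi m) (@phi_cont R m) cq.
have cqm' := @cadlag_comp R T q' (phi m) (@phi_cont R m) cq'.
have [Mq hMq] := @cadlag_bounded R T q cq.
have [Mq' hMq'] := @cadlag_bounded R T q' cq'.
have mp : forall i, measurable_fun setT (psi i) by move=> i; case: (hp i).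
have mp' : forall i, measurable_fun setT (psi' i) by move=> i; case: (hp' i).
have hy1 : `|phi m y| <= M := le_trans (phi_abs _ _ _) hy.
have hy1' : `|phi m y'| <= M := le_trans (phi_abs _ _ _) hy'.
have hL1 : (Linfnorm nu (trn m psi) <= M%:E)%E.
  by apply: le_trans hL; apply: Linfnorm_le => i e; exact: trunc_abs.
have hL1' : (Linfnorm nu (trn m psi') <= M%:E)%E.
  by apply: le_trans hL'; apply: Linfnorm_le => i e; exact: trunc_abs.
have hsq1 : supab 0 T (fun v => phi m (q v)) <= M.
  apply: le_trans hsq; apply: supab_le; [exact: ltW | by exists Mq | ].
  by move=> v _; exact: phi_abs.
have hsq1' : supab 0 T (fun v => phi m (q' v)) <= M.
  apply: le_trans hsq'; apply: supab_le; [exact: ltW | by exists Mq' | ].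
  by move=> v _; exact: phi_abs.
have H := MLf M M0 x x' _ _ (phi m y) (phi m y') (map_mx (phi m) z) (map_mx (phi m) z') _ _
  cqm cqm' (L2fun_trunc m hp) (L2fun_trunc m hp') hy1 hy1' hL1 hL1' hsq1 hsq1'.
move: H; apply: (@filterS _ _ (ae_filter_ringOfSetsType (@lebesgue_measure R))) => t H ht.
have [H1 H2] := H ht.
have /andP[t0 tT] := ht.
have KM0 : 0 <= K M by apply: ltW; apply: Kp.
have hz1 : enorm (map_mx (phi m) z) <= enorm z.
  by apply: enorm_le => i; rewrite mxE; exact: phi_abs.
have hz1' : enorm (map_mx (phi m) z') <= enorm z'.
  by apply: enorm_le => i; rewrite mxE; exact: phi_abs.
have hLp : L2norm nu (trn m psi) <= L2norm nu psi.
  by apply: L2norm_le => // [i|i e]; [exact: measurable_trunc | exact: trunc_abs].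
have hLp' : L2norm nu (trn m psi') <= L2norm nu psi'.
  by apply: L2norm_le => // [i|i e]; [exact: measurable_trunc | exact: trunc_abs].
split.
- apply: le_trans H1 _.
  have hS : supab t T (fun v => phi m (q v) - phi m (q' v)) <= supab t T (fun v => q v - q' v).
    apply: supab_le => //.
      exists (Mq + Mq') => v /andP[tv vT].
      have hv : 0 <= v <= T by apply/andP; split => //; lra.
      apply: le_trans (ler_normB _ _) _; apply: lerD; [exact: hMq | exact: hMq'].
    by move=> v _; exact: phi_lip.
  have hyd : `|phi m y - phi m y'| <= `|y - y'| := phi_lip _ _ _ _.
  have hL2 : L2norm nu (sub_psi (trn m psi) (trn m psi')) <= L2norm nu (sub_psi psi psi').
    apply: L2norm_le.
    - move=> i; apply: measurable_realfun.measurable_funB; exact: measurable_trunc.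
    - exact: L2fun_sub.
    - by move=> i e; exact: trunc_sub.
  have hdz : enorm (map_mx (phi m) z - map_mx (phi m) z') <= enorm (z - z').
    by apply: enorm_le => i; rewrite !mxE; exact: phi_lip.
  apply: lerD.
    by apply: ler_wpM2l => //; apply: lerD => //; apply: lerD.
  apply: ler_pM => //.
  - apply: mulr_ge0 => //.
    by rewrite !addr_ge0 ?L2norm_ge0 ?enorm_ge0.
  - exact: enorm_ge0.
  - apply: ler_wpM2l => //.
    by apply: lerD => //; apply: lerD => //; apply: lerD => //; apply: lerD.
- apply: le_trans H2 _.
  apply: ler_wpM2r; first exact: powR_ge0.
  apply: ler_wpM2l => //.
  apply: lerD; first apply: lerD => //.
    by apply: sq_le; rewrite !ger0_norm ?enorm_ge0.
  by apply: sq_le; rewrite !ger0_norm ?L2norm_ge0.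
Qed.

Lemma partD (R : realType) (T : R) (d k n : nat)
  (nu : 'I_k -> {measure set R -> \bar R}) (f : gen_type R n d k) m
  beta delta gamma (l : R -> R) : (0 < m)%N ->
  0 <= beta -> 0 <= delta -> 0 < gamma ->
  (forall i, (\int[nu i]_e (`|e| ^+ 2)%:E < +oo)%E) ->
  MS_ii T nu f beta delta gamma l -> (exists C, forall t, 0 <= t <= T -> l t <= C) ->
  exists C : R,
    forall x q y z psi, cadlag T q -> L2fun nu psi ->
      {ae lebesgue_measure, forall t, 0 <= t <= T -> `|fm f m t x q y z psi| <= C}.
Proof.
move=> m0 b0 d0 g0 hint MSii [Cl hCl].
pose cJ := (jfun gamma m%:R + jfun gamma (- m%:R)) * m%:R ^+ 2.
have cJ0 : 0 <= cJ by rewrite mulr_ge0 ?sqr_ge0 // addr_ge0 // jfun_ge0.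
pose Cint := fine (\sum_(i < k) \int[nu i]_e (cJ * `|e| ^+ 2)%:E)%E.
pose Ez := Num.sqrt (\sum_(i < d) (m%:R : R) ^+ 2).
exists (Cl + delta * m%:R + beta * m%:R + gamma / 2 * Ez ^+ 2 + Cint).
move=> x q y z psi cq hpsi.
have cqm := @cadlag_comp R T q (phi m) (@phi_cont R m) cq.
have hp' := L2fun_trunc m hpsi.
have mp : forall i, measurable_fun setT (psi i) by move=> i; case: (hpsi i).
have H := MSii x _ (phi m y) (map_mx (phi m) z) _ cqm hp'.
move: H; apply: (@filterS _ _ (ae_filter_ringOfSetsType (@lebesgue_measure R))) => t H ht.
have [H1 H2] := H ht.
have /andP[t0 tT] := ht.
have hI : (intE nu (jfun gamma) (trn m psi) <= Cint%:E)%E.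
  apply: intE_bound => //.
  - exact: measurable_jfun.
  - by move=> i; exact: measurable_trunc.
  - by move=> i e; exact: jtrn_bound.
have hI0 : (0 <= intE nu (jfun gamma) (trn m psi))%E.
  by apply: intE_ge0 => i e; exact: jfun_ge0.
have eqN : (fun i e => - trn m psi i e) = trn m (fun i e => - psi i e).
  by apply/funext => i; apply/funext => e; exact: truncN.
have hIN : (intE nu (jfun gamma) (fun i e => (- trn m psi i e)%R) <= Cint%:E)%E.
  rewrite eqN; apply: intE_bound => //.
  - exact: measurable_jfun.
  - by move=> i; apply: measurable_trunc; exact: measN.
  - by move=> i e; exact: jtrn_bound.
have hIN0 : (0 <= intE nu (jfun gamma) (fun i e => (- trn m psi i e)%R))%E.
  by apply: intE_ge0 => i e; exact: jfun_ge0.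
have fin1 : intE nu (jfun gamma) (trn m psi) \is a fin_num.
  by rewrite ge0_fin_numE //; apply: le_lt_trans hI _; exact: ltry.
have fin2 : intE nu (jfun gamma) (fun i e => (- trn m psi i e)%R) \is a fin_num.
  by rewrite ge0_fin_numE //; apply: le_lt_trans hIN _; exact: ltry.
rewrite -(fineK fin1) -EFinD lee_fin in H2.
rewrite -(fineK fin2) -EFinB lee_fin in H1.
rewrite -(fineK fin1) lee_fin in hI.
rewrite -(fineK fin2) lee_fin in hIN.
rewrite -(fineK fin1) lee_fin in hI0.
rewrite -(fineK fin2) lee_fin in hIN0.
have hS : supab t T (fun v => phi m (q v)) <= m%:R.
  by apply: supab_bound => // v _; exact: phi_bound.
have hS0 : 0 <= supab t T (fun v => phi m (q v)) := supab_ge0 _ _ _ _.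
have hy : `|phi m y| <= m%:R := phi_bound _ _ _.
have hE : enorm (map_mx (phi m) z) ^+ 2 <= Ez ^+ 2.
  apply: sq_le; rewrite !ger0_norm ?enorm_ge0 ?sqrtr_ge0 //.
  by apply: enorm_bound => i; rewrite mxE; exact: phi_bound.
have hl := hCl t ht.
have g2 : 0 <= gamma / 2 by rewrite divr_ge0 // ltW.
have hS' := ler_wpM2l d0 hS; have hy' := ler_wpM2l b0 hy; have hE' := ler_wpM2l g2 hE.
have hy0 := normr_ge0 (phi m y).
have e0 : 0 <= enorm (map_mx (phi m) z) ^+ 2 := sqr_ge0 _.
have p1 := mulr_ge0 d0 hS0; have p2 := mulr_ge0 b0 hy0; have p3 := mulr_ge0 g2 e0.
apply/normle; apply/andP; split.
- apply: le_trans H1; lra.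
- apply: le_trans H2 _; lra.
Qed.

Lemma partE (R : realType) (T : R) (d k n : nat)
  (nu : 'I_k -> {measure set R -> \bar R}) (f : gen_type R n d k) (xi : 'rV[R]_n -> R) m
  (K : R -> R) Kxi rho alpha : (0 < m)%N -> 0 < T ->
  (forall i, (\int[nu i]_e (`|e| ^+ 2)%:E < +oo)%E) ->
  ML_consts T nu f xi K Kxi rho alpha ->
  exists L : R, 0 < L /\
    forall x q q' y y' z z' psi psi',
      cadlag T q -> cadlag T q' -> L2fun nu psi -> L2fun nu psi' ->
      {ae lebesgue_measure, forall t, 0 <= t <= T ->
         `|fm f m t x q y z psi - fm f m t x q' y' z' psi'|
           <= L * (supab t T (fun v => q v - q' v) + `|y - y'|
                   + enorm (z - z') + L2norm nu (sub_psi psi psi'))}.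
Proof.
move=> m0 T0 hint; case=> Kp hc MLf hxi.
have mpos : (0 : R) < m%:R by rewrite ltr0n.
pose KM := K m%:R.
have KM0 : 0 < KM by apply: Kp.
pose Ez := Num.sqrt (\sum_(i < d) (m%:R : R) ^+ 2).
pose Bm := L2norm nu (fun i e => m%:R ^+ 2 * e).
have Ez0 : 0 <= Ez := sqrtr_ge0 _.
have Bm0 : 0 <= Bm := L2norm_ge0 _ _.
pose c1 := KM * (1 + 2 * Ez + 2 * Bm).
have c10 : 0 <= c1 by rewrite mulr_ge0 ?(ltW KM0) // !addr_ge0 // mulr_ge0.
exists (KM + c1); split; first lra.
move=> x q q' y y' z z' psi psi' cq cq' hp hp'.
have cqm := @cadlag_comp R T q (phi m) (@phi_cont R m) cq.
have cqm' := @cadlag_comp R T q' (phi m) (@phi_cont R m) cq'.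
have [Mq hMq] := @cadlag_bounded R T q cq.
have [Mq' hMq'] := @cadlag_bounded R T q' cq'.
have hy1 : `|phi m y| <= m%:R := phi_bound _ _ _.
have hy1' : `|phi m y'| <= m%:R := phi_bound _ _ _.
have hL1 : (Linfnorm nu (trn m psi) <= m%:R%:E)%E.
  by apply: Linfnorm_bound; [exact: ltW | move=> i e; exact: trunc_bound].
have hL1' : (Linfnorm nu (trn m psi') <= m%:R%:E)%E.
  by apply: Linfnorm_bound; [exact: ltW | move=> i e; exact: trunc_bound].
have hsq1 : supab 0 T (fun v => phi m (q v)) <= m%:R.
  by apply: supab_bound => [|v _]; [exact: ltW | exact: phi_bound].
have hsq1' : supab 0 T (fun v => phi m (q' v)) <= m%:R.
  by apply: supab_bound => [|v _]; [exact: ltW | exact: phi_bound].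
have H := MLf m%:R mpos x x _ _ (phi m y) (phi m y') (map_mx (phi m) z) (map_mx (phi m) z') _ _
  cqm cqm' (L2fun_trunc m hp) (L2fun_trunc m hp') hy1 hy1' hL1 hL1' hsq1 hsq1'.
move: H; apply: (@filterS _ _ (ae_filter_ringOfSetsType (@lebesgue_measure R))) => t H ht.
have [H1 _] := H ht.
have /andP[t0 tT] := ht.
have hS : supab t T (fun v => phi m (q v) - phi m (q' v)) <= supab t T (fun v => q v - q' v).
  apply: supab_le => //.
    exists (Mq + Mq') => v /andP[tv vT].
    have hv : 0 <= v <= T by apply/andP; split => //; lra.
    apply: le_trans (ler_normB _ _) _; apply: lerD; [exact: hMq | exact: hMq'].
  by move=> v _; exact: phi_lip.
have hyd : `|phi m y - phi m y'| <= `|y - y'| := phi_lip _ _ _ _.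
have hL2 : L2norm nu (sub_psi (trn m psi) (trn m psi')) <= L2norm nu (sub_psi psi psi').
  apply: L2norm_le.
  - move=> i; apply: measurable_realfun.measurable_funB; apply: measurable_trunc.
      by case: (hp i).
    by case: (hp' i).
  - exact: L2fun_sub.
  - by move=> i e; exact: trunc_sub.
have hdz : enorm (map_mx (phi m) z - map_mx (phi m) z') <= enorm (z - z').
  by apply: enorm_le => i; rewrite !mxE; exact: phi_lip.
have hE : enorm (map_mx (phi m) z) <= Ez.
  by apply: enorm_bound => i; rewrite mxE; exact: phi_bound.
have hE' : enorm (map_mx (phi m) z') <= Ez.
  by apply: enorm_bound => i; rewrite mxE; exact: phi_bound.
have hB : L2norm nu (trn m psi) <= Bm.
  apply: L2norm_le.
  - by move=> i; apply: measurable_trunc; case: (hp i).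
  - exact: L2fun_lin.
  - by move=> i e; exact: trn_lin.
have hB' : L2norm nu (trn m psi') <= Bm.
  apply: L2norm_le.
  - by move=> i; apply: measurable_trunc; case: (hp' i).
  - exact: L2fun_lin.
  - by move=> i e; exact: trn_lin.
apply: le_trans H1 _.
set X := supab t T (fun v => q v - q' v) + `|y - y'| + L2norm nu (sub_psi psi psi').
set D := enorm (z - z').
have X0 : 0 <= X by rewrite !addr_ge0 ?L2norm_ge0 ?supab_ge0.
have D0 : 0 <= D := enorm_ge0 _ _ _.
have s1 : K m%:R * (supab t T (fun v => phi m (q v) - phi m (q' v)) + `|phi m y - phi m y'|
            + L2norm nu (sub_psi (trn m psi) (trn m psi'))) <= KM * X.
  by apply: ler_wpM2l; [exact: ltW | apply: lerD => //; apply: lerD].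
have s2 : K m%:R * (1 + enorm (map_mx (phi m) z) + enorm (map_mx (phi m) z')
            + L2norm nu (trn m psi) + L2norm nu (trn m psi'))
          * enorm (map_mx (phi m) z - map_mx (phi m) z') <= c1 * D.
  apply: ler_pM => //.
  - by apply: mulr_ge0; [exact: ltW | rewrite !addr_ge0 ?L2norm_ge0 ?enorm_ge0].
  - exact: enorm_ge0.
  - apply: ler_wpM2l; first exact: ltW.
    have -> : 1 + 2 * Ez + 2 * Bm = 1 + Ez + Ez + Bm + Bm by ring.
    by apply: lerD => //; apply: lerD => //; apply: lerD => //; apply: lerD.
have eqR : (KM + c1) * (supab t T (fun v => q v - q' v) + `|y - y'| + D
             + L2norm nu (sub_psi psi psi')) = KM * X + KM * D + c1 * X + c1 * D.
  by rewrite /X; ring.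
rewrite eqR.
have p1 : 0 <= KM * D by rewrite mulr_ge0 // ltW.
have p2 : 0 <= c1 * X by rewrite mulr_ge0.
rewrite -/KM in s1 s2 *; lra.
Qed.


Unset Implicit Arguments. Set Strict Implicit.

Theorem lemma4p2 (R : realType) (T : R) (d k n : nat)
  (nu : 'I_k -> {measure set R -> \bar R})
  (dO : measure_display) (O : measurableType dO) (P : probability O R)
  (F : R -> set (set O))
  (f : gen_type R n d k) (xi : 'rV[R]_n -> R) :
  0 < T ->
  (forall i, sigma_finite setT (nu i)) ->
  (forall i, nu i [set 0] = 0%E) ->
  (forall i, (\int[nu i]_e (`|e| ^+ 2)%:E < +oo)%E) ->
  filtration F ->
  MS T nu P F f xi -> ML T nu f xi ->
  [/\ (* (MS)(i) for every f_m *)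
      (forall m, (0 < m)%N -> MS_i T nu P F (fm f m)),
      (* (MS)(ii),(iii) uniformly in m *)
      (exists beta delta gamma l, forall m, (0 < m)%N ->
         MS_consts T nu (fm f m) xi beta delta gamma l),
      (* (ML) uniformly in m *)
      (exists K Kxi rho alpha, forall m, (0 < m)%N ->
         ML_consts T nu (fm f m) xi K Kxi rho alpha),
      (* each f_m is a.e. bounded *)
      (forall m, (0 < m)%N -> exists C : R,
         forall x q y z psi, cadlag T q -> L2fun nu psi ->
           {ae lebesgue_measure, forall t, 0 <= t <= T ->
              `|fm f m t x q y z psi| <= C}) &
      (* each f_m is globally Lipschitz in (q, y, z, psi) *)
      (forall m, (0 < m)%N -> exists L : R, 0 < L /\
         forall x q q' y y' z z' psi psi',
           cadlag T q -> cadlag T q' -> L2fun nu psi -> L2fun nu psi' ->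
           {ae lebesgue_measure, forall t, 0 <= t <= T ->
              `|fm f m t x q y z psi - fm f m t x q' y' z' psi'|
                <= L * (supab t T (fun v => q v - q' v) + `|y - y'|
                        + enorm (z - z') + L2norm nu (sub_psi psi psi'))})].
Proof.
move=> T0 hsf hnu0 hint hF [MSi [beta [delta [gamma [l MSc]]]]] [K [Kxi [rho [alpha MLc]]]].
case: MSc => [[b0 d0 g0] lpos MSii MSiii].
split.
- by move=> m _; apply: partA.
- by exists beta, delta, gamma, l => m _; split => //; apply: partB.
- by exists K, Kxi, rho, alpha => m _; apply: partC.
- move=> m m0; case: MSiii => _ hl.
  exact: (@partD _ _ _ _ _ _ _ m _ _ _ _ m0 b0 d0 g0 hint MSii hl).
- move=> m m0; exact: (@partE _ _ _ _ _ _ _ _ m _ _ _ _ m0 T0 hint MLc).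
Qed.
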